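(* Let $M$ be a partial multiplication matrix whose row-column graph is a cycle, and let $\pi^\#$ be a gridded $M$-coil with points $v_1,\dots,v_n$ (ordered as in the definition of a coil). Then for every $1<i<n$, the gridded permutation $\pi^\#-v_i$ obtained by removing $v_i$ is $M$-divisible; specifically $\pi^\#-v_i=\sigma^\#\boxplus\tau^\#$, where $\sigma^\#$ and $\tau^\#$ are the gridded subpermutations on the points $v_{i+1},\dots,v_n$ and on the points $v_1,\dots,v_{i-1}$ respectively.
   Context: A gridding matrix has entries in $\{0,1,-1\}$; an $m\times n$ one has $m$ columns, $n$ rows, $M_{ij}$ in column $i$ from the left and row $j$ from the bottom. An $M$-gridding of a permutation $\pi$ of length $L$ is a choice of vertical lines $\tfrac12=v_0\le\dots\le v_m=L+\tfrac12$ and horizontal lines $\tfrac12=h_0\le\dots\le h_n=L+\tfrac12$, not through points of $\pi$, such that in each cell $C_{ij}=\{v_{i-1}<x<v_i,\ h_{j-1}<y<h_j\}$ the points of $\pi$ are absent if $M_{ij}=0$, increasing if $M_{ij}=1$, decreasing if $M_{ij}=-1$; the result is an $M$-gridded permutation. The row-column graph $G_M$ is the bipartite graph on $\{1,\dots,m\}\cup\{1',\dots,n'\}$ with edge $ij'$ iff $M_{ij}\ne0$. $M$ is a partial multiplication matrix: there are fixed $c_1,\dots,c_m,r_1,\dots,r_n\in\{\pm1\}$ with $M_{ij}=c_ir_j$ for each non-zero entry. Column $i$ is oriented left-to-right if $c_i=1$, right-to-left otherwise; row $j$ bottom-to-top if $r_j=1$, top-to-bottom otherwise. The orientation digraph of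 an $M$-gridded permutation has its points as vertices with $x\to y$ whenever $x,y$ lie in a common column of cells and $x$ precedes $y$ in that column's orientation, or in a common row of cells and $x$ precedes $y$ in that row's orientation. $M$-sum: $\sigma^\#\boxplus\tau^\#$ is the $M$-gridded permutation whose points are those of $\sigma^\#$ and $\tau^\#$, each in its cell, with the relative order among points of $\sigma^\#$ and among points of $\tau^\#$ unchanged, and such that in every column (resp. row) of cells all points of $\sigma^\#$ precede all points of $\tau^\#$ in that column's (resp. row's) orientation. $M$-divisible means equal to $\sigma^\#\boxplus\tau^\#$ with both non-empty. Let $\ell$ be the length of the cycle $G_M$. A gridded $M$-coil is an $M$-gridded permutation of length $n>\ell$ with an ordering $v_1,\dots,v_n$ of its points and a labelling of the $\ell$ non-zero cells by $1,\dots,\ell$ such that (C1) $v_i$ lies in cell $i\bmod\ell$ (residues in $\{1,\dots,\ell\}$); (C2) $v_{i-1}\to v_i$ for $1<i\le n$; (C3) $v_i\to v_{i-\ell-1}$ for $\ell+1<i\le n$; (C4) $v_{\ell+1}\to v_1$. *)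

(* Defs.v *)
From HB Require Import structures.
From mathcomp Require Import all_boot all_order all_algebra all_fingroup.
Set Implicit Arguments. Unset Strict Implicit. Unset Printing Implicit Defensive.

(* Conventions (0-based indices throughout):
   - A gridding matrix M : 'M[int]_(m,n); M i j is the entry in COLUMN i
     (from the left, i : 'I_m) and ROW j (from the bottom, j : 'I_n).
   - A gridded point configuration: a finite set of points with x- and
     y-coordinates (natural numbers) and gridlines.  The vertical line number
     k (0 <= k <= m) is encoded by a natural number gv k, standing for the
     half-integer line at position gv k - 1/2: a point with x-coordinate x is
     in column i iff gv i <= x < gv (i+1).  Horizontal lines likewise. *)

Record gconf := GConf {
  gpt : finType;
  gX  : gpt -> nat;
  gY  : gpt -> nat;
  gv  : nat -> nat;
  gh  : nat -> nat
}.
Arguments gX : clear implicits.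
Arguments gY : clear implicits.
Arguments gv : clear implicits.
Arguments gh : clear implicits.

Definition in_col (G : gconf) (p : gpt G) (i : nat) : Prop :=
  gv G i <= gX G p < gv G i.+1.
Definition in_row (G : gconf) (p : gpt G) (j : nat) : Prop :=
  gh G j <= gY G p < gh G j.+1.
Definition in_cell (G : gconf) (p : gpt G) (i j : nat) : Prop :=
  in_col p i /\ in_row p j.

Definition is_gridding_matrix (m n : nat) (M : 'M[int]_(m, n)) : Prop :=
  forall i j, M i j = 0%R \/ M i j = 1%R \/ M i j = (-1)%R.

Definition is_Mgridded (m n : nat) (M : 'M[int]_(m, n)) (G : gconf) : Prop :=
  ((injective (gX G)) /\ (injective (gY G)) /\ ((forall i, i < m -> gv G i <= gv G i.+1)) /\ ((forall j, j < n -> gh G j <= gh G j.+1)) /\ ((forall p, gv G 0 <= gX G p < gv G m)) /\ ((forall p, gh G 0 <= gY G p < gh G n)) /\ ((forall (p : gpt G) (i : 'I_m) (j : 'I_n), in_cell p i j -> M i j <> 0%R)) /\ ((forall p q (i : 'I_m) (j : 'I_n), in_cell p i j -> in_cell q i j ->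
          M i j = 1%R -> gX G p < gX G q -> gY G p < gY G q)) /\ ((forall p q (i : 'I_m) (j : 'I_n), in_cell p i j -> in_cell q i j ->
          M i j = (-1)%R -> gX G p < gX G q -> gY G q < gY G p))).

(* The configuration of a permutation pi of length L (point p : 'I_L has
   x-coordinate p and y-coordinate pi p, i.e. the paper's coordinates minus 1)
   with gridlines a (vertical) and b (horizontal). *)
Definition perm_gconf (L : nat) (pi : {perm 'I_L}) (a b : nat -> nat) : gconf :=
  @GConf 'I_L (fun p => val p) (fun p => val (pi p)) a b.

(* (pi, a, b) is an M-gridded permutation: first/last lines at 1/2 and L+1/2 *)
Definition Mgridded_perm (m n : nat) (M : 'M[int]_(m, n)) (L : nat)
    (pi : {perm 'I_L}) (a b : nat -> nat) : Prop :=
  [/\ a 0 = 0, a m = L, b 0 = 0, b n = L & is_Mgridded M (perm_gconf pi a b)].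

Definition pmm_signs (m n : nat) (M : 'M[int]_(m, n))
    (c : 'I_m -> int) (r : 'I_n -> int) : Prop :=
  [/\ forall i, c i = 1%R \/ c i = (-1)%R,
      forall j, r j = 1%R \/ r j = (-1)%R
    & forall i j, M i j <> 0%R -> M i j = (c i * r j)%R].

Definition prec (s : int) (u w : nat) : Prop :=
  if s == 1%R then u < w else w < u.

Definition arrow (m n : nat) (c : 'I_m -> int) (r : 'I_n -> int)
    (G : gconf) (p q : gpt G) : Prop :=
  (exists i : 'I_m, [/\ in_col p i, in_col q i & prec (c i) (gX G p) (gX G q)])
  \/ (exists j : 'I_n, [/\ in_row p j, in_row q j & prec (r j) (gY G p) (gY G q)]).

Definition rc_adj (m n : nat) (M : 'M[int]_(m, n)) : rel ('I_m + 'I_n) :=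
  fun u w => match u, w with
             | inl i, inr j => M i j != 0%R
             | inr j, inl i => M i j != 0%R
             | _, _ => false
             end.

Definition rc_is_cycle (m n : nat) (M : 'M[int]_(m, n)) : Prop :=
  [/\ 0 < m + n,
      forall u : 'I_m + 'I_n, #|[set w | rc_adj M u w]| = 2
    & forall u w : 'I_m + 'I_n, connect (rc_adj M) u w].

(* length of the cycle G_M = number of edges = number of non-zero cells *)
Definition cyc_len (m n : nat) (M : 'M[int]_(m, n)) : nat :=
  #|[set ij : 'I_m * 'I_n | M ij.1 ij.2 != 0%R]|.

(* Gridded M-coil: the permutation (pi,a,b), the ordering of points
   v_{k+1} = s k (k : 'I_L), and the labelling of the non-zero cells:
   label l+1 (0 <= l < ell) is the cell lab l. *)
Definition is_coil (m n : nat) (M : 'M[int]_(m, n)) (c : 'I_m -> int)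
    (r : 'I_n -> int) (L : nat) (pi : {perm 'I_L}) (a b : nat -> nat)
    (s : {perm 'I_L}) (lab : nat -> 'I_m * 'I_n) : Prop :=
  let G := perm_gconf pi a b in
  let ell := cyc_len M in
  ((Mgridded_perm M pi a b) /\ (ell < L) /\ (
      (forall l l', l < ell -> l' < ell -> lab l = lab l' -> l = l')) /\ ((forall l, l < ell -> M (lab l).1 (lab l).2 <> 0%R)) /\ (
      (forall k : 'I_L, @in_cell G (s k) (lab (k %% ell)).1 (lab (k %% ell)).2)) /\ (
      (forall k k' : 'I_L, val k' = (val k).+1 -> arrow c r (G := G) (s k) (s k'))) /\ (
      (forall k k' : 'I_L, ell < val k -> val k' = val k - ell - 1 ->
          arrow c r (G := G) (s k) (s k'))) /\ (
      (forall k k' : 'I_L, val k = ell -> val k' = 0 ->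
          arrow c r (G := G) (s k) (s k')))).

Definition restrict (G : gconf) (U : {set gpt G}) : gconf :=
  @GConf {p : gpt G | p \in U} (fun p => gX G (val p)) (fun p => gY G (val p))
         (gv G) (gh G).

Definition Msum (m n : nat) (c : 'I_m -> int) (r : 'I_n -> int)
    (P S T : gconf) : Prop :=
  exists f : gpt P -> (gpt S + gpt T)%type,
  ((bijective f) /\ (
      (forall p i j, in_cell p i j <->
         match f p with inl x => in_cell x i j | inr y => in_cell y i j end)) /\ (
      (forall p q x y, f p = inl x -> f q = inl y ->
         (gX P p < gX P q <-> gX S x < gX S y) /\
         (gY P p < gY P q <-> gY S x < gY S y))) /\ (
      (forall p q x y, f p = inr x -> f q = inr y ->
         (gX P p < gX P q <-> gX T x < gX T y) /\
         (gY P p < gY P q <-> gY T x < gY T y))) /\ (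
      (forall p q x y (i : 'I_m), f p = inl x -> f q = inr y ->
         in_col p i -> in_col q i -> prec (c i) (gX P p) (gX P q))) /\ (
      (forall p q x y (j : 'I_n), f p = inl x -> f q = inr y ->
         in_row p j -> in_row q j -> prec (r j) (gY P p) (gY P q)))).

Definition Mdivisible (m n : nat) (M : 'M[int]_(m, n)) (c : 'I_m -> int)
    (r : 'I_n -> int) (P : gconf) : Prop :=
  exists S T : gconf, [/\ is_Mgridded M S, is_Mgridded M T,
    0 < #|gpt S|, 0 < #|gpt T| & Msum c r P S T].

(* Main.v *)
Require Import Defs.
From HB Require Import structures.
From mathcomp Require Import all_boot all_order all_algebra all_fingroup.
From mathcomp Require Import zify.
Import GRing.Theory.
Set Implicit Arguments. Unset Strict Implicit. Unset Printing Implicit Defensive.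

Lemma mono_le (f : nat -> nat) N : (forall i, i < N -> f i <= f i.+1) ->
  forall x y, x <= y -> y <= N -> f x <= f y.
Proof.
move=> hf x y; elim: y => [|y IH]; first by rewrite leqn0 => /eqP ->.
rewrite leq_eqVlt => /orP [/eqP -> //| hxy] hy.
apply: leq_trans (IH hxy (ltnW hy)) (hf _ hy).
Qed.

Lemma uniq_interval (f : nat -> nat) N : (forall i, i < N -> f i <= f i.+1) ->
  forall i i' x, i < N -> i' < N -> f i <= x < f i.+1 -> f i' <= x < f i'.+1 -> i = i'.
Proof.
move=> hf i i' x hi hi' /andP[h1 h2] /andP[h3 h4].
case: (ltngtP i i') => // hlt.
- have := mono_le hf hlt (ltnW hi'). lia.
- have := mono_le hf hlt (ltnW hi). lia.
Qed.

Lemma prec_trans (sg : int) u v w : prec sg u v -> prec sg v w -> prec sg u w.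
Proof. rewrite /prec; case: (sg == 1%R); lia. Qed.

Lemma prec_irr (sg : int) u : ~ prec sg u u.
Proof. rewrite /prec; case: (sg == 1%R); lia. Qed.

Lemma mod_gap d a b : 0 < d -> a %% d = b %% d -> b < a -> b + d <= a.
Proof.
move=> d0 hm hba.
have : d %| a - b by rewrite -eqn_mod_dvd ?(ltnW hba) // hm.
move/dvdn_leq; rewrite subn_gt0 => /(_ hba). lia.
Qed.

Lemma card3 (T : finType) (x y z : T) : x != y -> x != z -> y != z -> #|[set x; y; z]| = 3.
Proof.
move=> h1 h2 h3. rewrite -setUA cardsU1 cards2 h3 !inE negb_or h1 h2. by [].
Qed.

Lemma modS_small x d : x < d -> x.+1 %% d = if x.+1 == d then 0 else x.+1.
Proof.
move=> h; case: eqP => [->|ne]; first by rewrite modnn.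
by rewrite modn_small //; lia.
Qed.

Lemma neq_modS d u : 2 <= d -> u.+1 %% d <> u %% d.
Proof.
move=> hd; rewrite -addn1 -modnDml addn1.
have : u %% d < d by rewrite ltn_mod; lia.
move: (u %% d) => x hx; rewrite modS_small //; case: ifP => /eqP; lia.
Qed.

Lemma modSm d u : u.+1 %% d = (u %% d).+1 %% d.
Proof. by rewrite -addn1 -modnDml addn1. Qed.

Lemma modn_subd d t : d <= t -> (t - d) %% d = t %% d.
Proof. by move=> h; rewrite -{2}(subnK h) modnDr. Qed.

Lemma modS_inj d u w : u.+1 %% d = w.+1 %% d -> u %% d = w %% d.
Proof. by move=> h; apply/eqP; rewrite -(eqn_modDr 1) !addn1; apply/eqP. Qed.
Section Coil.
Variables (m n : nat) (M : 'M[int]_(m, n)) (c : 'I_m -> int) (r : 'I_n -> int)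
  (L : nat) (pi : {perm 'I_L}) (a b : nat -> nat) (s : {perm 'I_L})
  (lab : nat -> 'I_m * 'I_n) (k0 : 'I_L).
Hypothesis hgrid : is_gridding_matrix M.
Hypothesis hpmm : pmm_signs M c r.
Hypothesis hcyc : rc_is_cycle M.
Hypothesis hcoil : is_coil M c r pi a b s lab.

Local Notation G := (perm_gconf pi a b).
Local Notation ell := (cyc_len M).

Lemma hMg : Mgridded_perm M pi a b. Proof. by case: hcoil. Qed.
Lemma hGg : is_Mgridded M G. Proof. by case: hMg. Qed.
Lemma hellL : ell < L. Proof. by case: hcoil => _ []. Qed.
Lemma hlabinj l l' : l < ell -> l' < ell -> lab l = lab l' -> l = l'.
Proof. by case: hcoil => _ [_ [h _]]; apply: h. Qed.
Lemma hlabnz l : l < ell -> M (lab l).1 (lab l).2 <> 0%R.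
Proof. by case: hcoil => _ [_ [_ [h _]]]; apply: h. Qed.
Lemma hC1 (q : 'I_L) : in_cell (G := G) (s q) (lab (q %% ell)).1 (lab (q %% ell)).2.
Proof. by case: hcoil => _ [_ [_ [_ [h _]]]]; apply: h. Qed.
Lemma hC2 (q q' : 'I_L) : val q' = (val q).+1 -> arrow c r (G := G) (s q) (s q').
Proof. by case: hcoil => _ [_ [_ [_ [_ [h _]]]]]; apply: h. Qed.
Lemma hC3 (q q' : 'I_L) : ell < val q -> val q' = val q - ell - 1 -> arrow c r (G := G) (s q) (s q').
Proof. by case: hcoil => _ [_ [_ [_ [_ [_ [h _]]]]]]; apply: h. Qed.
Lemma hC4 (q q' : 'I_L) : val q = ell -> val q' = 0 -> arrow c r (G := G) (s q) (s q').
Proof. by case: hcoil => _ [_ [_ [_ [_ [_ [_ h]]]]]]; apply: h. Qed.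

Definition v (t : nat) : 'I_L := s (insubd k0 t).
Lemma vE (q : 'I_L) : v q = s q.
Proof. by rewrite /v; congr (s _); apply: val_inj; rewrite val_insubd ltn_ord. Qed.
Lemma insubdE t : t < L -> val (insubd k0 t) = t.
Proof. by move=> h; rewrite val_insubd h. Qed.

Definition cellv t := lab (t %% ell).

Lemma C1v t : t < L -> in_cell (G := G) (v t) (cellv t).1 (cellv t).2.
Proof. by move=> h; have := hC1 (insubd k0 t); rewrite /cellv insubdE. Qed.
Lemma C2v t : t.+1 < L -> arrow c r (G := G) (v t) (v t.+1).
Proof. by move=> h; apply: hC2; rewrite !insubdE // ltnW. Qed.
Lemma C3v t : ell < t -> t < L -> arrow c r (G := G) (v t) (v (t - ell - 1)).
Proof. by move=> h1 h2; apply: hC3; rewrite !insubdE //; lia. Qed.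
Lemma C4v : arrow c r (G := G) (v ell) (v 0).
Proof. have h := hellL; by apply: hC4; rewrite !insubdE //; lia. Qed.


Definition onL (l : 'I_m + 'I_n) (p : 'I_L) : Prop :=
  match l with inl i => in_col (G := G) p i | inr j => in_row (G := G) p j end.
Definition precL (l : 'I_m + 'I_n) (p q : 'I_L) : Prop :=
  match l with inl i => prec (c i) (val p) (val q)
             | inr j => prec (r j) (val (pi p)) (val (pi q)) end.

Lemma arrowE p q : arrow c r (G := G) p q <-> exists l, [/\ onL l p, onL l q & precL l p q].
Proof.
split.
- case=> [[i [h1 h2 h3]]|[j [h1 h2 h3]]]; [exists (inl i) | exists (inr j)]; by split.
- case=> [[i|j] [h1 h2 h3]]; [left; exists i | right; exists j]; by split.
Qed.

Lemma precL_trans l p q w : precL l p q -> precL l q w -> precL l p w.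
Proof. case: l => /= i; exact: prec_trans. Qed.

Lemma precL_irr l p : ~ precL l p p.
Proof. case: l => /= i; exact: prec_irr. Qed.

Lemma col_uniq p (i i' : 'I_m) : in_col (G := G) p i -> in_col (G := G) p i' -> i = i'.
Proof.
case: hGg => _ [_ [hv _]] h1 h2; apply: val_inj.
exact: (uniq_interval hv (ltn_ord i) (ltn_ord i') h1 h2).
Qed.
Lemma row_uniq p (j j' : 'I_n) : in_row (G := G) p j -> in_row (G := G) p j' -> j = j'.
Proof.
case: hGg => _ [_ [_ [hh _]]] h1 h2; apply: val_inj.
exact: (uniq_interval hh (ltn_ord j) (ltn_ord j') h1 h2).
Qed.

Definition onLc (l : 'I_m + 'I_n) (x : 'I_m * 'I_n) : Prop := l = inl x.1 \/ l = inr x.2.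

Lemma onL_cell l p (x : 'I_m * 'I_n) : in_cell (G := G) p x.1 x.2 -> (onL l p <-> onLc l x).
Proof.
case=> hc hr; rewrite /onLc; split.
- by case: l => /= i h; [left; rewrite (col_uniq h hc) | right; rewrite (row_uniq h hr)].
- by case=> ->.
Qed.

Lemma onLc_uniq x y l l' : x <> y -> onLc l x -> onLc l y -> onLc l' x -> onLc l' y -> l = l'.
Proof.
case: x y => [i j] [i' j']; rewrite /onLc /= => hne [->|->] [e1|e1] [e2|e2] [e3|e3]; try congruence.
all: exfalso; apply: hne; congruence.
Qed.

Lemma cell_prec p q (i : 'I_m) (j : 'I_n) : in_cell (G := G) p i j -> in_cell (G := G) q i j ->
  (precL (inl i) p q <-> precL (inr j) p q).
Proof.
move=> hp hq; case: hGg => _ [hinjY [_ [_ [_ [_ [hnz [hinc hdec]]]]]]].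
case: hpmm => hc hr hM.
have hMij := hM _ _ (hnz _ _ _ hp).
have pq_neq : p <> q -> val (pi p) <> val (pi q).
  by move=> hne /val_inj /perm_inj.
have ord3 : forall u w : 'I_L, val u < val w \/ val u = val w \/ val w < val u.
  move=> u w; lia.
have eqv : forall u w : 'I_L, val u = val w -> u = w by move=> u w /val_inj.
rewrite /precL /prec.
case: (hc i) => hci; case: (hr j) => hrj; rewrite hci hrj in hMij *; rewrite ?eqxx /=.
- rewrite mulr1 in hMij.
  split=> h; first exact: (hinc p q i j hp hq hMij h).
  case: (ord3 p q) => [//|[/eqv e|h']]; first by subst; simpl in h; lia.
  have := (hinc q p i j hq hp hMij h'); simpl; lia.
- rewrite mulrN1 in hMij.
  split=> h; first exact: (hdec p q i j hp hq hMij h).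
  case: (ord3 p q) => [//|[/eqv e|h']]; first by subst; simpl in h; lia.
  have := (hdec q p i j hq hp hMij h'); simpl; lia.
- rewrite mulN1r in hMij.
  split=> h; first exact: (hdec q p i j hq hp hMij h).
  case: (ord3 q p) => [//|[/eqv e|h']]; first by subst; simpl in h; lia.
  have := (hdec p q i j hp hq hMij h'); simpl; lia.
- rewrite mulrNN mulr1 in hMij.
  split=> h; first exact: (hinc q p i j hq hp hMij h).
  case: (ord3 q p) => [//|[/eqv e|h']]; first by subst; simpl in h; lia.
  have := (hinc p q i j hp hq hMij h'); simpl; lia.
Qed.


Lemma onLv l t : t < L -> (onL l (v t) <-> onLc l (cellv t)).
Proof. by move=> h; apply: onL_cell; apply: C1v. Qed.

Lemma precC_any p q (x : 'I_m * 'I_n) (l l' : 'I_m + 'I_n) : in_cell (G := G) p x.1 x.2 -> in_cell (G := G) q x.1 x.2 ->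
  onLc l x -> onLc l' x -> precL l p q -> precL l' p q.
Proof.
move=> hp hq [->|->] [->|->] //; by move/(cell_prec hp hq).
Qed.

Lemma arrow_line t t' (l : 'I_m + 'I_n) : t < L -> t' < L -> cellv t <> cellv t' ->
  arrow c r (G := G) (v t) (v t') -> onLc l (cellv t) -> onLc l (cellv t') ->
  precL l (v t) (v t').
Proof.
move=> ht ht' hne /arrowE [l' [h1 h2 h3]] hl1 hl2.
move/(onLv l' ht): h1 => h1; move/(onLv l' ht'): h2 => h2.
by rewrite (onLc_uniq hne hl1 hl2 h1 h2).
Qed.

Lemma arrow_same t t' (l : 'I_m + 'I_n) : t < L -> t' < L -> cellv t = cellv t' ->
  arrow c r (G := G) (v t) (v t') -> onLc l (cellv t) -> precL l (v t) (v t').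
Proof.
move=> ht ht' he /arrowE [l' [h1 h2 h3]] hl.
move/(onLv l' ht): h1 => h1.
apply: (precC_any (C1v ht) _ h1 hl h3); rewrite he; exact: C1v.
Qed.

Definition NS (l : 'I_m + 'I_n) := [set w | rc_adj M l w].
Lemma NS2 l : #|NS l| = 2. Proof. by case: hcyc => _ h _; apply: h. Qed.
Definition oth (l : 'I_m + 'I_n) (x : 'I_m * 'I_n) : 'I_m + 'I_n :=
  match l with inl _ => inr x.2 | inr _ => inl x.1 end.
Lemma oth_in (l : 'I_m + 'I_n) (x : 'I_m * 'I_n) : onLc l x -> M x.1 x.2 != 0%R -> oth l x \in NS l.
Proof. by case: x => i j; rewrite /onLc /= => -[->|->] h; rewrite inE /= h. Qed.
Lemma oth_inj (l : 'I_m + 'I_n) (x y : 'I_m * 'I_n) : onLc l x -> onLc l y -> oth l x = oth l y -> x = y.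
Proof.
case: x y => [i j] [i' j']; rewrite /onLc /= => -[->|->] [e|e] /=; try congruence.
Qed.
Lemma no3 (l : 'I_m + 'I_n) (x y z : 'I_m * 'I_n) : onLc l x -> onLc l y -> onLc l z ->
  M x.1 x.2 != 0%R -> M y.1 y.2 != 0%R -> M z.1 z.2 != 0%R ->
  x != y -> x != z -> y != z -> False.
Proof.
move=> hx hy hz nx ny nz dxy dxz dyz.
have ne : forall u w, onLc l u -> onLc l w -> u != w -> oth l u != oth l w.
  by move=> u w hu hw /eqP d; apply/eqP => /(oth_inj hu hw).
have := card3 (ne _ _ hx hy dxy) (ne _ _ hx hz dxz) (ne _ _ hy hz dyz).
have : [set oth l x; oth l y; oth l z] \subset NS l.
  apply/subsetP => w; rewrite !inE => /orP [/orP [] | ] /eqP ->; by move: (oth_in hx nx) (oth_in hy ny) (oth_in hz nz); rewrite !inE.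
move/subset_leq_card; rewrite NS2 => h1 h2; rewrite h2 in h1; done.
Qed.


Lemma ell3 : 3 <= ell.
Proof.
case: hcyc => h0 _ _.
case: (posnP m) => [m0|hm].
  have hn : 0 < n by lia.
  have := NS2 (inr (Ordinal hn)).
  suff -> : NS (inr (Ordinal hn)) = set0 by rewrite cards0.
  apply/setP => -[i|j']; rewrite !inE //.
  exfalso; case: i => i hi; move: hi; by rewrite m0.
have [w1 [w2 [hw1 hw2 hw12]]] : exists w1 w2, [/\ w1 \in NS (inl (Ordinal hm)), w2 \in NS (inl (Ordinal hm)) & w1 != w2].
  by apply/card_gt1P; rewrite NS2.
case: w1 hw1 hw12 => [i|j1]; first by rewrite inE.
case: w2 hw2 => [i|j2]; first by rewrite inE.
rewrite !inE /= => hj2 hj1 hj12.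
have [i1 [hi1 hi1nz]] : exists i1 : 'I_m, i1 != Ordinal hm /\ M i1 j1 != 0%R.
  have [u1 [u2 [hu1 hu2 hu12]]] : exists u1 u2, [/\ u1 \in NS (inr j1), u2 \in NS (inr j1) & u1 != u2].
    by apply/card_gt1P; rewrite NS2.
  case: u1 hu1 hu12 => [i1|j]; last by rewrite inE.
  case: u2 hu2 => [i2|j]; last by rewrite inE.
  rewrite !inE /= => h2 h1 h12.
  case: (eqVneq i1 (Ordinal hm)) => [e|ne]; last by exists i1.
  exists i2; split => //; apply: contra h12; rewrite e => /eqP ->; done.
have d1 : (Ordinal hm, j1) != (Ordinal hm, j2) by rewrite xpair_eqE eqxx.
have d2 : (Ordinal hm, j1) != (i1, j1) by rewrite xpair_eqE eqxx andbT eq_sym.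
have d3 : (Ordinal hm, j2) != (i1, j1) by rewrite xpair_eqE eq_sym (negbTE hi1).
have := card3 d1 d2 d3.
have : [set (Ordinal hm, j1); (Ordinal hm, j2); (i1, j1)] \subset [set ij : 'I_m * 'I_n | M ij.1 ij.2 != 0%R].
  by apply/subsetP => w; rewrite !inE => /orP [/orP [] | ] /eqP -> /=.
move/subset_leq_card => h1 h2; rewrite h2 in h1; exact: h1.
Qed.


Lemma ell0 : 0 < ell. Proof. by have := ell3; lia. Qed.

Lemma cellv_mod t : cellv (t %% ell) = cellv t.
Proof. by rewrite /cellv modn_mod. Qed.

Lemma consec z : z < ell -> exists l, onLc l (lab z) /\ onLc l (lab (z.+1 %% ell)).
Proof.
move=> hz; have hL := hellL.
have /arrowE [l [h1 h2 _]] := C2v (leq_ltn_trans hz hL).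
move/(onLv l (ltn_trans hz hL)): h1; move/(onLv l (leq_ltn_trans hz hL)): h2.
rewrite /cellv (modn_small hz) => h2 h1; by exists l.
Qed.

Lemma labne x y : x < ell -> y < ell -> x != y -> lab x != lab y.
Proof. by move=> hx hy hne; apply/eqP => /(hlabinj hx hy) e; rewrite e eqxx in hne. Qed.

Lemma labnz x : x < ell -> M (lab x).1 (lab x).2 != 0%R.
Proof. by move=> hx; apply/eqP; apply: hlabnz. Qed.

Lemma two_lines (x : 'I_m * 'I_n) (l l1 l2 : 'I_m + 'I_n) :
  onLc l x -> onLc l1 x -> onLc l2 x -> l1 <> l -> l2 <> l -> l1 = l2.
Proof. rewrite /onLc; move=> [->|->] [->|->] [->|->] //. Qed.

Lemma nb x y (l : 'I_m + 'I_n) : x < ell -> y < ell -> x <> y ->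
  onLc l (lab x) -> onLc l (lab y) -> y = x.+1 %% ell \/ x = y.+1 %% ell.
Proof.
move=> hx hy hxy hlx hly; have h3 := ell3.
set xp := x.+1 %% ell.
set xm := if x is x'.+1 then x' else ell.-1.
have hxp : xp < ell by apply: ltn_pmod; apply: ell0.
have hxm : xm < ell by rewrite /xm; case: (x) hx => [|x'] /=; lia.
have xmp : xm.+1 %% ell = x.
  rewrite /xm; case: (x) hx => [|x'] /= hx'; first by rewrite prednK ?modnn //; lia.
  by rewrite modn_small.
have dxp : x != xp by rewrite /xp modS_small //; case: ifP => /eqP e; apply/eqP; lia.
have dxm : xm != x by rewrite /xm; case: (x) hx => [|x'] /= hx; apply/eqP; lia.
have dpm : xm != xp by rewrite /xp modS_small // /xm; case: ifP => /eqP e; case: (x) hx e => [|x'] /= hx e; apply/eqP; lia.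
have [l1 [h1x h1p]] := consec hx.
have [l2 [h2m h2x]] := consec hxm; rewrite xmp in h2x.
case: (eqVneq l1 l) => [e1|n1].
  case: (eqVneq y xp) => [->|nyp]; first by left.
  exfalso; subst l1.
  apply: (no3 hlx hly h1p (labnz hx) (labnz hy) (labnz hxp)); apply: labne => //.
  by apply/eqP.
case: (eqVneq l2 l) => [e2|n2].
  case: (eqVneq y xm) => [->|nym]; first by right.
  exfalso; subst l2.
  apply: (no3 hlx hly h2m (labnz hx) (labnz hy) (labnz hxm)); apply: labne => //.
  - by apply/eqP.
  - by rewrite eq_sym.
have e12 := two_lines hlx h1x h2x (elimN eqP n1) (elimN eqP n2).
subst l2; exfalso.
by apply: (no3 h2m h1x h1p (labnz hxm) (labnz hx) (labnz hxp)); apply: labne.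
Qed.


Lemma cellv_eq t t' : t %% ell = t' %% ell -> cellv t = cellv t'.
Proof. by rewrite /cellv => ->. Qed.

Lemma step_same t : ell <= t -> t < L -> precL (inl (cellv t).1) (v t) (v (t - ell)).
Proof.
move=> h1 h2; have h3 := ell3.
have ce : cellv (t - ell) = cellv t by apply: cellv_eq; rewrite modn_subd.
have [hlt|heq] : ell < t \/ ell = t by lia.
- set u := t - ell - 1.
  have hu : u.+1 = t - ell by rewrite /u; lia.
  have huL : u < L by rewrite /u; lia.
  have cu : cellv u <> cellv t.
    apply/eqP; apply: labne; try (apply: ltn_pmod; apply: ell0).
    apply/eqP => e. apply: (@neq_modS ell u); first lia.
    by rewrite hu modn_subd ?e //; lia.
  have /arrowE [l1 [a1 a2 a3]] := C3v hlt h2.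
  move/(onLv l1 h2): a1 => a1; move/(onLv l1 huL): a2 => a2.
  have hp2 : precL l1 (v u) (v (t - ell)).
    rewrite -hu; apply: arrow_line => //; first by rewrite hu; lia.
    + by rewrite hu ce.
    + by apply: C2v; rewrite hu; lia.
    + by rewrite hu ce.
  have := precL_trans a3 hp2.
  apply: (precC_any (C1v h2)); [rewrite -ce; apply: C1v; lia | exact: a1 | by left].
- rewrite -heq subnn.
  apply: arrow_same => //; try lia.
  + by apply: cellv_eq; rewrite modnn mod0n.
  + exact: C4v.
  + by left.
Qed.

Lemma same_cell t t' : t' < t -> t < L -> t %% ell = t' %% ell ->
  precL (inl (cellv t).1) (v t) (v t').
Proof.
elim/ltn_ind: t t' => t IH t' h1 h2 h3.
have hg := mod_gap ell0 h3 h1.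
have hs := step_same (leq_trans (leq_addl _ _) hg) h2.
case: (ltngtP (t - ell) t') => [hlt|hgt|heq]; first by lia.
- have ce : cellv (t - ell) = cellv t by apply: cellv_eq; rewrite modn_subd //; lia.
  have := IH (t - ell) _ t' hgt _ _.
  rewrite ce => /(_ _ _ _) h; apply: (precL_trans hs); apply: h.
  + by have := ell0; lia.
  + lia.
  + by rewrite modn_subd //; lia.
- by rewrite -heq.
Qed.

Lemma same_cellL t t' (l : 'I_m + 'I_n) : t' < t -> t < L -> t %% ell = t' %% ell ->
  onLc l (cellv t) -> precL l (v t) (v t').
Proof.
move=> h1 h2 h3 hl.
have := same_cell h1 h2 h3.
apply: (precC_any (C1v h2)); [rewrite (cellv_eq h3); apply: C1v; lia | by left | exact: hl].
Qed.


Lemma main_prec (l : 'I_m + 'I_n) t t' : t'.+1 < t -> t < L ->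
  onL l (v t) -> onL l (v t') -> precL l (v t) (v t').
Proof.
move=> h1 h2 o1 o2; have h3 := ell3; have hL := hellL.
have ht' : t' < L by lia.
move/(onLv l h2): o1 => o1; move/(onLv l ht'): o2 => o2.
have mlt : forall u, u %% ell < ell by move=> u; apply: ltn_pmod; apply: ell0.
case: (eqVneq (t %% ell) (t' %% ell)) => [e|ne].
  apply: same_cellL => //; lia.
have cne : cellv t <> cellv t' by apply/eqP; apply: labne => //.
have [hy|hx] := nb (mlt t) (mlt t') (elimN eqP ne) o1 o2.
-
  case: (posnP t') => [t0|tpos].
  + subst t'.
    have hx : t %% ell = ell.-1.
      move: hy; rewrite mod0n modS_small //; case: ifP => /eqP; lia.
    have tge : ell.-1 <= t by rewrite -hx leq_mod.
    have cm : cellv ell.-1 = cellv t by apply: cellv_eq; rewrite hx modn_small //; lia.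
    have c0 : cellv ell = cellv 0 by apply: cellv_eq; rewrite modnn mod0n.
    have P1 : precL l (v t) (v ell.-1) \/ t = ell.-1.
      case: (ltngtP ell.-1 t) => [lt|gt|eq]; [left | lia | by right].
      apply: same_cellL => //; rewrite hx modn_small //; lia.
    have P2 : precL l (v ell.-1) (v ell).
      have a2 : arrow c r (G := G) (v ell.-1) (v ell).
        have := @C2v ell.-1; rewrite (prednK ell0); apply; lia.
      apply: (arrow_line _ _ _ a2); try lia.
      * rewrite c0 cm; exact: cne.
      * by rewrite cm.
      * by rewrite c0.
    have P3 : precL l (v ell) (v 0).
      apply: arrow_same; try lia; [exact: c0 | exact: C4v | by rewrite c0].
    have P23 := precL_trans P2 P3.
    by case: P1 => [P1|->] //; apply: precL_trans P1 P23.
  + set w := t'.-1.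
    have hw : w.+1 = t' by rewrite /w; lia.
    have wm : w %% ell = t %% ell.
      apply: modS_inj; rewrite hw hy -modSm //.
    have P1 : precL l (v t) (v w) by apply: same_cellL => //; lia.
    have P2 : precL l (v w) (v t').
      rewrite -hw; apply: arrow_line; try lia.
      * by rewrite hw (cellv_eq wm).
      * apply: C2v; lia.
      * by rewrite (cellv_eq wm).
      * by rewrite hw.
    exact: precL_trans P1 P2.
-
  have tm : t %% ell = t'.+1 %% ell by rewrite hx [RHS]modSm.
  have hg := mod_gap ell0 tm h1.
  set u := t - ell - 1.
  have hu : u.+1 + ell = t by rewrite /u; lia.
  have um : u %% ell = t' %% ell.
    apply: modS_inj; rewrite -tm -hu modnDr //.
  have P1 : precL l (v t) (v u).
    apply: arrow_line; try lia.
    * by rewrite (cellv_eq um).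
    * apply: C3v; lia.
    * exact: o1.
    * by rewrite (cellv_eq um).
  case: (ltngtP t' u) => [lt|gt|eq]; last by rewrite eq.
  + apply: (precL_trans P1); apply: same_cellL => //; try lia.
    by rewrite (cellv_eq um).
  + lia.
Qed.


Lemma restrict_gridded (A : {set 'I_L}) : is_Mgridded M (restrict (G := G) A).
Proof.
case: hGg => hX [hY [hv [hh [hrx [hry [hnz [hinc hdec]]]]]]].
split; first by move=> x y /= /hX /val_inj.
split; first by move=> x y /= /hY /val_inj.
split; first exact: hv.
split; first exact: hh.
split; first by move=> p; apply: hrx.
split; first by move=> p; apply: hry.
split; first by move=> p i j; apply: hnz.
split; first by move=> p q i j; apply: hinc.
by move=> p q i j; apply: hdec.
Qed.

Lemma prec_ST (k : 'I_L) (p q : 'I_L) (i : 'I_m + 'I_n) :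
  val k < val ((s^-1)%g p) -> val ((s^-1)%g q) < val k -> onL i p -> onL i q -> precL i p q.
Proof.
move=> hp hq op oq.
have ep : p = v ((s^-1)%g p) by rewrite vE permKV.
have eq' : q = v ((s^-1)%g q) by rewrite vE permKV.
rewrite ep eq'; rewrite ep in op; rewrite eq' in oq.
apply: main_prec => //; move: hp hq => /= hp hq; lia.
Qed.


Lemma final (k : 'I_L) : 0 < val k -> (val k).+1 < L ->
  let U := [set p : 'I_L | p != s k] in
  let Sset := [set s q | q : 'I_L & val k < val q] in
  let Tset := [set s q | q : 'I_L & val q < val k] in
  Mdivisible M c r (restrict (G := G) U) /\
  Msum c r (restrict (G := G) U) (restrict (G := G) Sset) (restrict (G := G) Tset).
Proof.
move=> hk0 hkL U Sset Tset.
have memS x : (x \in Sset) = (val k < val ((s^-1)%g x)).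
  apply/imsetP/idP => [[q hq ->]|h]; first by rewrite permK; move: hq; rewrite inE.
  by exists ((s^-1)%g x); rewrite ?inE ?permKV.
have memT x : (x \in Tset) = (val ((s^-1)%g x) < val k).
  apply/imsetP/idP => [[q hq ->]|h]; first by rewrite permK; move: hq; rewrite inE.
  by exists ((s^-1)%g x); rewrite ?inE ?permKV.
have memU x : (x \in U) = ((s^-1)%g x != k).
  rewrite inE; apply/idP/idP; apply: contra => /eqP e.
  - by rewrite -e permKV.
  - by rewrite e permK.
have hL0 : 0 < L by lia.
pose kp : 'I_L := Ordinal hkL.
pose z0 : 'I_L := Ordinal hL0.
have sS : s kp \in Sset by rewrite memS permK /=.
have sT : s z0 \in Tset by rewrite memT permK /=.
have uS : s kp \in U by rewrite memU permK; apply/eqP => /(congr1 val) /=; lia.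
pose s0 : {x | x \in Sset} := exist _ (s kp) sS.
pose t0 : {x | x \in Tset} := exist _ (s z0) sT.
pose u0 : {x | x \in U} := exist _ (s kp) uS.
have SU x : x \in Sset -> x \in U.
  by rewrite memS memU => h; apply/eqP => e; rewrite e ltnn in h.
have TU x : x \in Tset -> x \in U.
  by rewrite memT memU => h; apply/eqP => e; rewrite e ltnn in h.
have US x : x \in U -> x \notin Sset -> x \in Tset.
  rewrite memS memT memU => /eqP h1 h2.
  have : val ((s^-1)%g x) <> val k by move/val_inj.
  move: h2; lia.
have STn x : x \in Tset -> x \notin Sset.
  rewrite memS memT => h; lia.
pose f (p : {x | x \in U}) : ({x | x \in Sset} + {x | x \in Tset})%type :=
  if val p \in Sset then inl (insubd s0 (val p)) else inr (insubd t0 (val p)).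
pose g (w : ({x | x \in Sset} + {x | x \in Tset})%type) : {x | x \in U} :=
  match w with inl x => insubd u0 (val x) | inr y => insubd u0 (val y) end.
have fE p x : f p = inl x -> val p \in Sset /\ val x = val p.
  by rewrite /f; case: ifP => h //= [<-]; rewrite val_insubd h.
have fE' p y : f p = inr y -> val p \in Tset /\ val y = val p.
  rewrite /f; case: ifP => h //= [<-].
  have hT := US _ (valP p) (negbT h).
  by rewrite val_insubd hT.
have hMs : Msum c r (restrict (G := G) U) (restrict (G := G) Sset) (restrict (G := G) Tset).
  exists f; split.
    exists g.
    - move=> p; apply: val_inj; rewrite /f; case: ifP => h /=.
      + by rewrite !val_insubd h (valP p).
      + by rewrite !val_insubd (US _ (valP p) (negbT h)) (valP p).
    - case=> x.
      + have vg : val (g (inl x)) = val x by rewrite /= val_insubd (SU _ (valP x)).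
        rewrite /f vg (valP x); congr inl; apply: val_inj; by rewrite val_insubd (valP x).
      + have vg : val (g (inr x)) = val x by rewrite /= val_insubd (TU _ (valP x)).
        rewrite /f vg (negbTE (STn _ (valP x))); congr inr; apply: val_inj; by rewrite val_insubd (valP x).
  split.
    move=> p i j; case E: (f p) => [x|y].
    - by have [_ ex] := fE _ _ E; rewrite /in_cell /in_col /in_row /= ex.
    - by have [_ ey] := fE' _ _ E; rewrite /in_cell /in_col /in_row /= ey.
  split.
    move=> p q x y Ep Eq; have [_ ex] := fE _ _ Ep; have [_ ey] := fE _ _ Eq.
    by rewrite /= ex ey.
  split.
    move=> p q x y Ep Eq; have [_ ex] := fE' _ _ Ep; have [_ ey] := fE' _ _ Eq.
    by rewrite /= ex ey.
  split.
    move=> p q x y i Ep Eq hp hq; have [Sp _] := fE _ _ Ep; have [Tq _] := fE' _ _ Eq.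
    rewrite memS in Sp; rewrite memT in Tq.
    exact: (@prec_ST k _ _ (inl i) Sp Tq hp hq).
  move=> p q x y j Ep Eq hp hq; have [Sp _] := fE _ _ Ep; have [Tq _] := fE' _ _ Eq.
  rewrite memS in Sp; rewrite memT in Tq.
  exact: (@prec_ST k _ _ (inr j) Sp Tq hp hq).
split => //.
exists (restrict (G := G) Sset), (restrict (G := G) Tset); split => //.
- exact: restrict_gridded.
- exact: restrict_gridded.
- by apply/card_gt0P; exists s0.
- by apply/card_gt0P; exists t0.
Qed.

End Coil.

Theorem lemma3p9 (m n : nat) (M : 'M[int]_(m, n))
    (c : 'I_m -> int) (r : 'I_n -> int)
    (L : nat) (pi : {perm 'I_L}) (a b : nat -> nat)
    (s : {perm 'I_L}) (lab : nat -> 'I_m * 'I_n) :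
  is_gridding_matrix M ->
  pmm_signs M c r ->
  rc_is_cycle M ->
  is_coil M c r pi a b s lab ->
  forall k : 'I_L, 0 < val k -> (val k).+1 < L ->
  let G := perm_gconf pi a b in
  let U := [set p : 'I_L | p != s k] in
  let Sset := [set s q | q : 'I_L & val k < val q] in
  let Tset := [set s q | q : 'I_L & val q < val k] in
  Mdivisible M c r (restrict (G := G) U) /\
  Msum c r (restrict (G := G) U) (restrict (G := G) Sset) (restrict (G := G) Tset).
Proof.
move=> hgrid hpmm hcyc hcoil k hk0 hkL.
exact: (final k hpmm hcyc hcoil hk0 hkL).
Qed.
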